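(* For any $\vartheta,\varphi\in[0,2\pi]$ and $p,q\in[0,1]$, $$\sqrt{1-pq\cos(\vartheta+\varphi)}\le\sqrt{1-p\cos\vartheta}+\sqrt{1-q\cos\varphi},$$ $$\sqrt{1-pq\cos(\vartheta-\varphi)}\ge\sqrt{1-p\cos\vartheta}-\sqrt{1-q\cos\varphi}.$$ *)

(* Defs.v *)
From Stdlib Require Import Reals.

(* Main.v *)
Require Import Defs.
From Stdlib Require Import Reals Lra Psatz.
Open Scope R_scope.

Theorem lemma1 (theta phi p q : R)
  (Htheta : 0 <= theta <= 2 * PI) (Hphi : 0 <= phi <= 2 * PI)
  (Hp : 0 <= p <= 1) (Hq : 0 <= q <= 1) :
  sqrt (1 - p * q * cos (theta + phi))
    <= sqrt (1 - p * cos theta) + sqrt (1 - q * cos phi) /\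
  sqrt (1 - p * q * cos (theta - phi))
    >= sqrt (1 - p * cos theta) - sqrt (1 - q * cos phi).
Proof.
  rewrite cos_plus, cos_minus.
  set (c1 := cos theta). set (s1 := sin theta).
  set (c2 := cos phi). set (s2 := sin phi).
  assert (E1 : s1 * s1 + c1 * c1 = 1) by (pose proof (sin2_cos2 theta); unfold Rsqr in *; unfold s1, c1; lra).
  assert (E2 : s2 * s2 + c2 * c2 = 1) by (pose proof (sin2_cos2 phi); unfold Rsqr in *; unfold s2, c2; lra).
  assert (B1 : -1 <= c1 <= 1) by (unfold c1; split; [apply COS_bound|apply COS_bound]).
  assert (B2 : -1 <= c2 <= 1) by (unfold c2; split; [apply COS_bound|apply COS_bound]).
  assert (A1 : 0 <= 1 - p * c1) by nra.
  assert (A2 : 0 <= 1 - q * c2) by nra.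
  set (x := sqrt (1 - p * c1)). set (y := sqrt (1 - q * c2)).
  assert (X0 : 0 <= x) by apply sqrt_pos.
  assert (Y0 : 0 <= y) by apply sqrt_pos.
  assert (X2 : x * x = 1 - p * c1) by (apply sqrt_sqrt; exact A1).
  assert (Y2 : y * y = 1 - q * c2) by (apply sqrt_sqrt; exact A2).
  assert (S1 : (p * s1) * (p * s1) <= x * x * (2 - x * x)) by nra.
  assert (S2 : (q * s2) * (q * s2) <= y * y * (2 - y * y)) by nra.
  assert (XY0 : 0 <= x * y) by (apply Rmult_le_pos; lra).
  assert (XY4 : (x * y) * (x * y) <= 4).
  { replace ((x * y) * (x * y)) with ((x*x)*(y*y)) by ring.
    replace 4 with (2*2) by ring. apply Rmult_le_compat; nra. }
  assert (XY2 : x * y <= 2) by nra.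
  assert (Q0 : 0 <= x * y * (2 - x * y)) by nra.
  assert (K2 : (p * s1 * (q * s2)) * (p * s1 * (q * s2)) <= (x * y * (2 - x * y)) * (x * y * (2 - x * y))).
  { assert (H2 : (2 - x * x) * (2 - y * y) <= (2 - x * y) * (2 - x * y)).
    { assert (0 <= (x - y) * (x - y)) by apply Rle_0_sqr.
      assert (Eq : (2 - x * y) * (2 - x * y) - (2 - x * x) * (2 - y * y) = 2 * ((x - y) * (x - y))) by ring.
      lra. }
    assert (Hx : 0 <= 2 - x * x) by nra.
    assert (Hy : 0 <= 2 - y * y) by nra.
    apply Rle_trans with ((x * x * (2 - x * x)) * (y * y * (2 - y * y))).
    - replace (p * s1 * (q * s2) * (p * s1 * (q * s2))) with ((p * s1) * (p * s1) * ((q * s2) * (q * s2))) by ring.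
      apply Rmult_le_compat; try apply Rle_0_sqr; assumption.
    - replace ((x * y * (2 - x * y)) * (x * y * (2 - x * y))) with ((x*x)*(y*y)*((2 - x * y) * (2 - x * y))) by ring.
      replace ((x * x * (2 - x * x)) * (y * y * (2 - y * y))) with ((x*x)*(y*y)*((2 - x * x) * (2 - y * y))) by ring.
      apply Rmult_le_compat_l; [apply Rmult_le_pos; apply Rle_0_sqr | exact H2]. }
  assert (K : Rabs (p * s1 * (q * s2)) <= x * y * (2 - x * y)).
  { apply Rsqr_le_abs_0 in K2; unfold Rsqr in *. rewrite (Rabs_pos_eq (x * y * (2 - x * y))) in K2 by exact Q0. exact K2. }
  assert (Kr : p * s1 * (q * s2) <= x * y * (2 - x * y)) by (pose proof (Rle_abs (p * s1 * (q * s2))); lra).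
  assert (Kl : - (x * y * (2 - x * y)) <= p * s1 * (q * s2)) by (pose proof (Rle_abs (- (p * s1 * (q * s2)))); rewrite Rabs_Ropp in *; lra).
  split.
  - rewrite <- (sqrt_square (x + y)) by lra.
    apply sqrt_le_1_alt. nra.
  - apply Rle_ge. destruct (Rle_dec x y) as [Hle|Hlt].
    + pose proof (sqrt_pos (1 - p * q * (c1 * c2 + s1 * s2))). lra.
    + rewrite <- (sqrt_square (x - y)) by lra.
      apply sqrt_le_1_alt. nra.
Qed.
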